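(* Consider, for $x> 0$, the planar piecewise-smooth system $$\dot x=1,\qquad \dot y=-ay-\sin\!\left[\pi x\left(1+\tfrac12\lambda\right)\right],$$ with $a>0$, where $\lambda=\operatorname{sign}(y)$ for $y\neq0$ and $\lambda\in(-1,1)$ for $y=0$. Then its sliding manifold is $$\Lambda^{N}=\left\{(x,0)\in\mathbb{R}^2:\ x\in\left(\tfrac{2n}{3},\,2n\right),\ n\in\mathbb{N}\setminus\{0\}\right\}.$$
   Context: The sliding manifold is the set of points $(x,0)$ on the switching line $y=0$ for which there exists $\lambda\in(-1,1)$ with $\sin\!\left[\pi x\left(1+\tfrac12\lambda\right)\right]=0$, i.e. points where a motion $y\equiv0$, $\dot x=1$ along the switching line is possible. *)

(* Defs.v *)
From Stdlib Require Import Reals.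
Open Scope R_scope.

Definition ydot (a x y lam : R) : R := - a * y - sin (PI * x * (1 + lam / 2)).

(* Sliding manifold (as defined in the paper): the points (x,0), x > 0, of the
   switching line y = 0 for which some lambda in (-1,1) makes the motion
   y == 0, x' = 1 possible, i.e. sin(pi x (1 + lambda/2)) = 0
   (equivalently, ydot a x 0 lam = 0). *)
Definition sliding_manifold (a : R) (p : R * R) : Prop :=
  0 < fst p /\ snd p = 0 /\
  exists lam : R, -1 < lam < 1 /\ sin (PI * fst p * (1 + lam / 2)) = 0.

(* Main.v *)
Require Import Defs.
From Stdlib Require Import Reals Lra Lia Psatz ZArith.
Open Scope R_scope.

Theorem proposition2 (a : R) (ha : 0 < a) :
  forall p : R * R,
    sliding_manifold a p <->
    (snd p = 0 /\
     exists n : nat, (1 <= n)%nat /\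
       2 * INR n / 3 < fst p < 2 * INR n).
Proof.
  intros [x y]; unfold sliding_manifold; simpl; split.
  - intros [hx [hy [l [hl hs]]]]; split; [exact hy|].
    destruct (sin_eq_0_0 _ hs) as [k hk].
    pose proof PI_RGT_0 as hpi.
    assert (e : x * (1 + l / 2) = IZR k).
    { apply (Rmult_eq_reg_l PI); [|lra]. rewrite <- Rmult_assoc, hk. ring. }
    assert (hk0 : (0 < k)%Z). { apply lt_0_IZR. rewrite <- e. nra. }
    exists (Z.to_nat k). rewrite INR_IZR_INZ, Z2Nat.id by lia.
    split; [lia|]. rewrite <- e. split; nra.
  - intros [hy [n [hn [h1 h2]]]].
    assert (hn0 : 0 < INR n) by (apply lt_0_INR; lia).
    assert (hx : 0 < x) by lra.
    split; [exact hx|]. split; [exact hy|].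
    exists (2 * (INR n / x - 1)). split.
    + assert (q1 : INR n / x < 3 / 2).
      { apply (Rmult_lt_reg_r x); [lra|]. replace (INR n / x * x) with (INR n) by (field; lra). lra. }
      assert (q2 : 1 / 2 < INR n / x).
      { apply (Rmult_lt_reg_r x); [lra|]. replace (INR n / x * x) with (INR n) by (field; lra). lra. }
      lra.
    + apply sin_eq_0_1. exists (Z.of_nat n). rewrite <- INR_IZR_INZ.
      field. lra.
Qed.
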